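(* Let $T$ be a complete first order theory, $\varphi(x,\bar y)\in\mathbb{L}(\tau_T)$, $M\models T$, $I$ a set, and $\bar b_t\in{}^{\ell g(\bar y)}M$ for $t\in I$ such that $\langle\varphi(x,\bar b_t):t\in I\rangle$ is an independent sequence of formulas in $M$. Let $\mathbb B^c_I$ be the completion of the Boolean algebra freely generated by $\langle e_t:t\in I\rangle$. Then there is a function $F:{}^{\ell g(\bar y)}M\to\mathbb B^c_I$ such that: ($\alpha$) $F(\bar b_t)=e_t$ for all $t\in I$; ($\beta$) for every ultrafilter $D$ of $\mathbb B^c_I$ there is a unique $p=p_D\in\mathbf S_\varphi(M)$ such that for every $\bar b\in{}^{\ell g(\bar y)}M$ we have $\varphi(x,\bar b)\in p\iff F(\bar b)\in D$.
   Context: $\langle\varphi(x,\bar b_t):t\in I\rangle$ is independent in $M$ means: for all disjoint finite $s_1,s_2\subseteq I$ there is $a\in M$ with $M\models\varphi[a,\bar b_t]$ for $t\in s_1$ and $M\models\neg\varphi[a,\bar b_t]$ for $t\in s_2$. $\mathbf S_\varphi(M)$ is the set of complete $\varphi$-types over $M$: maximal sets of formulas of the form $\varphi(x,\bar b)$ or $\neg\varphi(x,\bar b)$ with $\bar b\in{}^{\ell g(\bar y)}M$ which are consistent with the elementary diagram of $M$. *)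

(* Defs.v *)
From HB Require Import structures.
From mathcomp Require Import all_boot all_order.
From Stdlib Require List.
Set Implicit Arguments. Unset Strict Implicit. Unset Printing Implicit Defensive.
Import Order.TTheory.
Local Open Scope order_scope.

(* Model-theoretic side.  The structure M is represented by its carrier
   type M; the formula phi(x, y_1..y_n) is represented by its
   interpretation in M, a relation  phi : M -> n.-tuple M -> Prop.                                            *)

Definition independent_in (M I : Type) (n : nat)
  (phi : M -> n.-tuple M -> Prop) (b : I -> n.-tuple M) : Prop :=
  forall s1 s2 : seq I,
    (forall t, List.In t s1 -> ~ List.In t s2) ->
    exists a : M, (forall t, List.In t s1 -> phi a (b t)) /\
                  (forall t, List.In t s2 -> ~ phi a (b t)).

(* A phi-formula with parameters: (true, bb) stands for phi(x, bb),
   (false, bb) stands for ~ phi(x, bb). *)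
Definition phi_formula (M : Type) (n : nat) := (bool * n.-tuple M)%type.

Definition satisfies (M : Type) (n : nat) (phi : M -> n.-tuple M -> Prop)
  (a : M) (f : phi_formula M n) : Prop :=
  if f.1 then phi a f.2 else ~ phi a f.2.

(* A set of phi-formulas over M is consistent with the elementary diagram
   of M iff it is finitely satisfiable in M. *)
Definition phi_consistent (M : Type) (n : nat) (phi : M -> n.-tuple M -> Prop)
  (p : phi_formula M n -> Prop) : Prop :=
  forall l : seq (phi_formula M n), (forall f, List.In f l -> p f) ->
    exists a : M, forall f, List.In f l -> satisfies phi a f.

Definition in_S_phi (M : Type) (n : nat) (phi : M -> n.-tuple M -> Prop)
  (p : phi_formula M n -> Prop) : Prop :=
  phi_consistent phi p /\
  forall q : phi_formula M n -> Prop,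
    phi_consistent phi q -> (forall f, p f -> q f) -> forall f, q f -> p f.

(* Boolean-algebra side: Boolean algebras are ctbDistrLatticeType's.  *)

Section BA.
Context {d : Order.disp_t} {B : ctbDistrLatticeType d}.

Definition complete_BA : Prop :=
  forall S : B -> Prop, exists s : B,
    (forall x, S x -> x <= s) /\
    (forall u, (forall x, S x -> x <= u) -> s <= u).

Inductive gen_subalg (I : Type) (e : I -> B) : B -> Prop :=
  | gen_base t : gen_subalg e (e t)
  | gen_top : gen_subalg e \top
  | gen_meet x y : gen_subalg e x -> gen_subalg e y -> gen_subalg e (x `&` y)
  | gen_compl x : gen_subalg e x -> gen_subalg e (~` x).

Definition freely_generates (I : Type) (e : I -> B) : Prop :=
  forall (d' : Order.disp_t) (A : ctbDistrLatticeType d') (f : I -> A),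
  exists h : B -> A,
    (forall t, h (e t) = f t) /\
    (forall x y, gen_subalg e x -> gen_subalg e y -> h (x `&` y) = h x `&` h y) /\
    (forall x, gen_subalg e x -> h (~` x) = ~` h x).

Definition dense_in (S : B -> Prop) : Prop :=
  forall y : B, y <> \bot -> exists x, S x /\ x <> \bot /\ x <= y.

(* (B, e) is (a copy of) the completion B^c_I of the Boolean algebra
   freely generated by <e_t : t in I> *)
Definition completion_of_free (I : Type) (e : I -> B) : Prop :=
  complete_BA /\ freely_generates e /\ dense_in (gen_subalg e).

Definition is_filter (D : B -> Prop) : Prop :=
  D \top /\ (forall x y, D x -> x <= y -> D y) /\
  (forall x y, D x -> D y -> D (x `&` y)).

Definition is_ultrafilter (D : B -> Prop) : Prop :=
  is_filter D /\ ~ D \bot /\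
  forall D', is_filter D' -> ~ D' \bot -> (forall x, D x -> D' x) ->
    forall x, D' x -> D x.

End BA.

(* Main.v *)
Require Import Defs.
From HB Require Import structures.
From mathcomp Require Import all_boot all_order.
From mathcomp Require Import boolp classical_sets.
From Stdlib Require Import Classical ClassicalEpsilon FunctionalExtensionality PropExtensionality.
From Stdlib Require List.
Set Implicit Arguments. Unset Strict Implicit.
Import Order.Theory.
Local Open Scope order_scope.

Section Aux.
Context {d : Order.disp_t} {B : ctbDistrLatticeType d}.
Implicit Types x y z : B.

Lemma meet_compl0 x y : x `&` ~` y = \bot -> x <= y.
Proof.
move=> h; rewrite -(@cover_leIxl _ _ (~` y) x y); first by rewrite h le0x.
by rewrite joinC joinxC.
Qed.

Lemma le_compl_meet0 x y : x <= ~` y -> x `&` y = \bot.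
Proof.
move=> h; apply/le_anti; rewrite le0x andbT.
by rewrite -(meetCx y); apply: leI2.
Qed.

Lemma uf_compl (D : B -> Prop) x : is_ultrafilter D -> D x \/ D (~` x).
Proof.
move=> [[Dt [Dup Dm]] [Nb Dmax]].
case: (classic (D (~` x))) => hc; [by right|left].
pose D' := fun y => exists2 c, D c & x `&` c <= y.
have fD' : is_filter D'.
  split; first by exists \top => //; exact: lex1.
  split; first by move=> u v [c Dc h] uv; exists c => //; exact: le_trans uv.
  move=> u v [c1 D1 h1] [c2 D2 h2]; exists (c1 `&` c2); first exact: Dm.
  rewrite lexI; apply/andP; split.
    by apply: le_trans h1; apply: leI2 => //; exact: leIl.
  by apply: le_trans h2; apply: leI2 => //; exact: leIr.
have nb : ~ D' \bot.
  move=> [c Dc h]; apply: hc; apply: (Dup c) => //.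
  rewrite -(@cover_leIxl _ _ x c (~` x)); last by rewrite joinxC.
  by rewrite meetC; apply: le_trans h _; exact: le0x.
apply: (Dmax D' fD' nb).
  by move=> u Du; exists u => //; exact: leIr.
by exists \top => //; rewrite meetx1.
Qed.

End Aux.

Section Main.
Variables (M : Type) (n : nat) (phi : M -> n.-tuple M -> Prop).
Variables (d : Order.disp_t) (B : ctbDistrLatticeType d).

Definition T := (n.-tuple M * B)%type.
Definition lit (g : bool * T) : B := if g.1 then g.2.2 else ~` g.2.2.
Definition lsat (a : M) (g : bool * T) : Prop :=
  if g.1 then phi a g.2.1 else ~ phi a g.2.1.
Definition meetL (l : seq (bool * T)) : B := foldr (fun g acc => lit g `&` acc) \top l.

Definition good (S : T -> Prop) : Prop :=
  forall l : seq (bool * T), (forall g, List.In g l -> S g.2) ->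
    (forall a, ~ (forall g, List.In g l -> lsat a g)) -> meetL l = \bot.

Lemma meetL_cat l1 l2 : meetL (l1 ++ l2) = meetL l1 `&` meetL l2.
Proof. by elim: l1 => [|g l IH] /=; rewrite ?meet1x // IH meetA. Qed.

Lemma meetL_in l g : List.In g l -> meetL l <= lit g.
Proof.
elim: l => [//|h l IH] /= [->|hin]; first exact: leIl.
apply: le_trans (IH hin); exact: leIr.
Qed.

Lemma good_fun S bb y1 y2 : good S -> S (bb, y1) -> S (bb, y2) -> y1 = y2.
Proof.
move=> gS h1 h2.
have key : forall u v, S (bb, u) -> S (bb, v) -> u <= v.
  move=> u v hu hv; apply: meet_compl0.
  have := gS [:: (true, (bb, u)); (false, (bb, v))].
  rewrite /= meetx1 /lit /=; apply.
    by move=> g [<-|[<-|[]]].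
  by move=> a H; apply: (H (false, (bb, v))); [right; left|apply: (H (true,(bb,u))); left].
by apply/le_anti; rewrite !key.
Qed.

Lemma decomp (S : T -> Prop) (bb : n.-tuple M) (y : B) l :
  (forall g, List.In g l -> S g.2 \/ g.2 = (bb, y)) ->
  exists l0, exists hp hn : bool,
    (forall g, List.In g l0 -> S g.2) /\
    meetL l <= meetL l0 /\ (hp -> meetL l <= y) /\ (hn -> meetL l <= ~` y) /\
    forall a, (forall g, List.In g l0 -> lsat a g) -> (hp -> phi a bb) ->
      (hn -> ~ phi a bb) -> forall g, List.In g l -> lsat a g.
Proof.
elim: l => [|g l IH] H.
  by exists [::], false, false; split => //=; split => //.
have [l0 [hp [hn [H0 [H1 [H2 [H3 H4]]]]]]] : exists l0, exists hp hn : bool,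
    (forall g, List.In g l0 -> S g.2) /\
    meetL l <= meetL l0 /\ (hp -> meetL l <= y) /\ (hn -> meetL l <= ~` y) /\
    forall a, (forall g, List.In g l0 -> lsat a g) -> (hp -> phi a bb) ->
      (hn -> ~ phi a bb) -> forall g, List.In g l -> lsat a g.
  by apply: IH => g' hg'; apply: H; right.
have le1 : meetL (g :: l) <= meetL l by rewrite /=; exact: leIr.
case: (H g (or_introl erefl)) => [Sg|eg].
  exists (g :: l0), hp, hn; split.
    by move=> g' /= [<-|]; [|apply: H0].
  split; first by rewrite /=; apply: leI2.
  split; first by move=> /H2; apply: le_trans.
  split; first by move=> /H3; apply: le_trans.
  move=> a Ha Hp Hn g' /= [<-|hg']; first by apply: Ha; left.
  by apply: H4 => // g'' h''; apply: Ha; right.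
clear H; case: g eg le1 => [eps [bb' y']] /= [-> ->] le1.
exists l0, (hp || eps), (hn || ~~ eps); split => //.
split; first exact: le_trans le1 H1.
split.
  destruct hp => /=.
    by move=> _; apply: le_trans le1 (H2 isT).
  by move=> ->; rewrite /lit /=; exact: leIl.
split.
  destruct hn => /=.
    by move=> _; apply: le_trans le1 (H3 isT).
  by destruct eps => //= _; rewrite /lit /=; exact: leIl.
move=> a Ha Hp Hn g' /= [<-|hg'].
  rewrite /lsat /=; destruct eps => /=.
    by apply: Hp; rewrite orbT.
  by apply: Hn; rewrite orbT.
apply: H4 => //.
  by move=> hp1; apply: Hp; rewrite hp1.
by move=> hn1; apply: Hn; rewrite hn1.
Qed.


Lemma good_mono (S S' : T -> Prop) : good S -> (forall z, S' z -> S z) -> good S'.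
Proof. by move=> gS h l hl; apply: gS => g /hl /h. Qed.

Lemma extend (S : T -> Prop) (bb : n.-tuple M) (lo : B) :
  good S ->
  (forall x, (exists l, (forall g, List.In g l -> S g.2) /\
      (forall a, (forall g, List.In g l -> lsat a g) -> phi a bb) /\ x = meetL l) -> x <= lo) ->
  (forall u, (forall x, (exists l, (forall g, List.In g l -> S g.2) /\
      (forall a, (forall g, List.In g l -> lsat a g) -> phi a bb) /\ x = meetL l) -> x <= u) -> lo <= u) ->
  good (fun z => S z \/ z = (bb, lo)).
Proof.
move=> gS Hub Hlub l hl hunsat.
have [l0 [hp [hn [H0 [H1 [H2 [H3 H4]]]]]]] := decomp hl.
apply/le_anti; rewrite le0x andbT.
destruct hp; destruct hn.
- by rewrite -(meetxC lo) lexI (H2 isT) (H3 isT).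
- have c : meetL l0 `&` lo = \bot.
    rewrite meetC; apply: le_compl_meet0; apply: Hlub => x [l' [hl' [hphi ->]]].
    apply: meet_compl0; rewrite complK -meetL_cat; apply: gS.
      by move=> g hg; case: (List.in_app_or _ _ _ hg) => ?; [apply: hl'|apply: H0].
    move=> a Ha; apply: (hunsat a); apply: H4 => //.
      by move=> g hg; apply: Ha; apply: List.in_or_app; right.
    by move=> _; apply: hphi => g hg; apply: Ha; apply: List.in_or_app; left.
  by rewrite -c lexI H1 (H2 isT).
- have c : meetL l0 <= lo.
    apply: Hub; exists l0; split => //; split => // a Ha.
    apply: NNPP => nphi; apply: (hunsat a); apply: H4 => //.
  by rewrite -(meetxC lo) lexI (H3 isT) andbT; exact: le_trans H1 c.
- have c : meetL l0 = \bot.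
    by apply: gS => // a Ha; apply: (hunsat a); apply: H4.
  by rewrite -c H1.
Qed.

Lemma good_R0 (I : Type) (b : I -> n.-tuple M) (e : I -> B) :
  independent_in phi b -> good (fun z => exists t, z = (b t, e t)).
Proof.
move=> Hind l hl hunsat.
have [s1 [s2 [Hs1 [Hs2 Hsat]]]] : exists s1 s2 : seq I,
    (forall t, List.In t s1 -> meetL l <= e t) /\
    (forall t, List.In t s2 -> meetL l <= ~` e t) /\
    forall a, (forall t, List.In t s1 -> phi a (b t)) ->
      (forall t, List.In t s2 -> ~ phi a (b t)) -> forall g, List.In g l -> lsat a g.
  elim: l hl {hunsat} => [|g l IH] hl.
    by exists [::], [::]; split => //.
  have [s1 [s2 [Hs1 [Hs2 Hsat]]]] := IH (fun g' h => hl g' (or_intror h)).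
  have le1 : meetL (g :: l) <= meetL l by rewrite /=; exact: leIr.
  have [t et] := hl g (or_introl erefl).
  case: g et le1 {hl} => [eps z] /= -> le1.
  destruct eps.
  - exists (t :: s1), s2; split.
      move=> t' /= [<-|h]; first exact: leIl.
      exact: le_trans le1 (Hs1 _ h).
    split; first by move=> t' h; exact: le_trans le1 (Hs2 _ h).
    move=> a h1 h2 g' /= [<-|h]; first by apply: h1; left.
    by apply: Hsat => // t' ht; apply: h1; right.
  - exists s1, (t :: s2); split.
      by move=> t' h; exact: le_trans le1 (Hs1 _ h).
    split.
      move=> t' /= [<-|h]; first exact: leIl.
      exact: le_trans le1 (Hs2 _ h).
    move=> a h1 h2 g' /= [<-|h]; first by apply: h2; left.
    by apply: Hsat => // t' ht; apply: h2; right.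
have [t [h1 h2]] : exists t, List.In t s1 /\ List.In t s2.
  apply: NNPP => hn.
  have [a [Ha1 Ha2]] := Hind s1 s2 (fun t h1 h2 => hn (ex_intro _ t (conj h1 h2))).
  by apply: (hunsat a); apply: Hsat.
apply/le_anti; rewrite le0x andbT.
by rewrite -(meetxC (e t)) lexI Hs1 // Hs2.
Qed.

Lemma ext_list (q : phi_formula M n -> Prop) f0 l :
  (forall f, List.In f l -> q f \/ f = f0) ->
  exists l0, (forall f, List.In f l0 -> q f) /\
    forall a, (forall f, List.In f l0 -> satisfies phi a f) -> satisfies phi a f0 ->
      forall f, List.In f l -> satisfies phi a f.
Proof.
elim: l => [|f l IH] H; first by exists [::].
have [l0 [H0 H1]] := IH (fun f' h => H f' (or_intror h)).
case: (H f (or_introl erefl)) => [qf|->].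
  exists (f :: l0); split; first by move=> f' /= [<-|]; [|apply: H0].
  move=> a Ha Hf f' /= [<-|h]; first by apply: Ha; left.
  by apply: H1 => // f'' h''; apply: Ha; right.
exists l0; split => // a Ha Hf f' /= [<-|h] //.
exact: H1.
Qed.

Lemma type_neg (q : phi_formula M n -> Prop) bb :
  in_S_phi phi q -> (q (false, bb) <-> ~ q (true, bb)).
Proof.
move=> [qc qmax]; split.
  move=> hf ht; have [a Ha] := qc [:: (true, bb); (false, bb)] (fun f h =>
    match h with or_introl e => eq_ind _ q ht _ e
    | or_intror (or_introl e) => eq_ind _ q hf _ e
    | or_intror (or_intror h) => False_ind _ h end).
  by apply: (Ha (false, bb)); [right; left|apply: (Ha (true, bb)); left].
move=> nt; apply: NNPP => nf.
have inc : forall f0, ~ q f0 -> ~ phi_consistent phi (fun f => q f \/ f = f0).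
  move=> f0 nq hc; apply: nq; apply: (qmax _ hc); [by move=> f; left|by right].
have [l [hl1 hl2]] : exists l, (forall f, List.In f l -> q f \/ f = (false, bb)) /\
    ~ exists a, forall f, List.In f l -> satisfies phi a f.
  apply: NNPP => H; apply: (inc _ nf) => l hl; apply: NNPP => H'.
  by apply: H; exists l; split.
have [l' [hl1' hl2']] : exists l, (forall f, List.In f l -> q f \/ f = (true, bb)) /\
    ~ exists a, forall f, List.In f l -> satisfies phi a f.
  apply: NNPP => H; apply: (inc _ nt) => k hl; apply: NNPP => H'.
  by apply: H; exists k; split.
have [l0 [H0 H1]] := ext_list hl1.
have [l0' [H0' H1']] := ext_list hl1'.
have [a Ha] := qc (l0 ++ l0') (fun f h => match List.in_app_or _ _ _ h with
   or_introl h1 => H0 f h1 | or_intror h2 => H0' f h2 end).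
case: (classic (phi a bb)) => hp.
  apply: hl2'; exists a; apply: H1' => [f hf|]; last exact: hp.
  by apply: Ha; apply: List.in_or_app; right.
apply: hl2; exists a; apply: H1 => [f hf|]; last exact: hp.
by apply: Ha; apply: List.in_or_app; left.
Qed.

End Main.

Theorem claim2p3 (M I : Type) (n : nat) (phi : M -> n.-tuple M -> Prop)
  (b : I -> n.-tuple M) (Hind : independent_in phi b)
  (d : Order.disp_t) (B : ctbDistrLatticeType d) (e : I -> B)
  (HB : completion_of_free e) :
  exists F : n.-tuple M -> B,
    (forall t, F (b t) = e t) /\
    (forall D : B -> Prop, is_ultrafilter D ->
       exists! p : phi_formula M n -> Prop,
         in_S_phi phi p /\ (forall bb : n.-tuple M, p (true, bb) <-> D (F bb))).
Proof.
pose R0 := fun z : T M n B => exists t, z = (b t, e t).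
have gR0 : good phi R0 := @good_R0 M n phi d B I b e Hind.
pose P := fun X : T M n B -> Prop => good phi (fun z => X z \/ R0 z).
have Hch : forall F : (T M n B -> Prop) -> Prop, (forall X, F X -> P X) ->
    total_on F subset -> P (fun z => exists2 X, F X & X z).
  move=> F FP tot l hl hunsat.
  have [X [HX Hl]] : exists X : T M n B -> Prop, (F X \/ X = (fun _ => False)) /\
      forall g, List.In g l -> X g.2 \/ R0 g.2.
    elim: l hl {hunsat} => [|g l IH] hl.
      by exists (fun _ => False); split; [right|].
    have [X [HX Hl]] := IH (fun g' h => hl g' (or_intror h)).
    case: (hl g (or_introl erefl)) => [[Y FY Yg]|Rg].
      case: HX => [FX|EX].
        case: (tot X Y FX FY) => sub.
          exists Y; split; first by left.
          move=> g' /= [<-|h]; first by left.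
          by case: (Hl g' h) => [/sub|]; [left|right].
        exists X; split; first by left.
        move=> g' /= [<-|h]; first by left; apply: sub.
        exact: Hl.
      exists Y; split; first by left.
      move=> g' /= [<-|h]; first by left.
      by case: (Hl g' h); [rewrite EX|right].
    exists X; split => //.
    move=> g' /= [<-|h]; first by right.
    exact: Hl.
  case: HX => [FX|EX].
    by apply: (FP X FX) => // g /Hl.
  apply: gR0 => // g /Hl; rewrite EX; case=> //.
have [A [PA Amax]] := @Zorn_bigcup (T M n B) P Hch.
pose R := fun z => A z \/ R0 z.
have [Hcomp _] := HB.
have Htot : forall bb, exists y, R (bb, y).
  move=> bb.
  have [lo [Hub Hlub]] := Hcomp (fun x => exists l, (forall g, List.In g l -> R g.2) /\
      (forall a, (forall g, List.In g l -> lsat phi a g) -> phi a bb) /\ x = meetL l).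
  have g := extend PA Hub Hlub.
  case: (classic (R (bb, lo))) => h; first by exists lo.
  exfalso; apply: (Amax (fun z => A z \/ z = (bb, lo))).
    split; first by move=> z hz; left.
    by move=> sub; apply: h; left; apply: sub; right.
  apply: (good_mono g) => z [[hz|hz]|hz]; by [left; left|right|left; right].
pose F := fun bb => proj1_sig (constructive_indefinite_description _ (Htot bb)).
have HF : forall bb, R (bb, F bb) by move=> bb; exact: proj2_sig (constructive_indefinite_description _ (Htot bb)).
exists F; split.
  move=> t; apply: (good_fun PA (HF (b t))); right; exists t; done.
move=> D UD.
have [[Dt [Dup Dm]] [Nb _]] := UD.
pose p := fun f : phi_formula M n => if f.1 then D (F f.2) else ~ D (F f.2).
have pS : in_S_phi phi p.
  split.
    move=> l hl; apply: NNPP => hn.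
    pose l' := map (fun f : phi_formula M n => (f.1, (f.2, F f.2))) l.
    have m0 : meetL l' = \bot.
      apply: PA.
        by move=> g /List.in_map_iff [f [<- _]]; exact: HF.
      move=> a Ha; apply: hn; exists a => f hf.
      have := Ha (f.1, (f.2, F f.2)) (List.in_map _ _ _ hf).
      by rewrite /lsat /satisfies.
    apply: Nb; rewrite -m0.
    have : forall f, List.In f l -> p f := hl.
    rewrite /l'; elim: l {hl hn m0 l'} => [|f l IH] hl /=; first exact: Dt.
    apply: Dm; last by apply: IH => f' h; apply: hl; right.
    have := hl f (or_introl erefl); rewrite /p /lit /=.
    case: f.1 => // nD.
    by case: (uf_compl (F f.2) UD).
  move=> q qc pq [eps bb] qf; apply: NNPP => np.
  have pn : p (~~ eps, bb).
    by move: np; rewrite /p /=; destruct eps => /= np; [|apply: NNPP].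
  have qn := pq _ pn.
  have [a Ha] := qc [:: (eps, bb); (~~ eps, bb)] (fun f h =>
    match h with or_introl e => eq_ind _ q qf _ e
    | or_intror (or_introl e) => eq_ind _ q qn _ e
    | or_intror (or_intror h) => False_ind _ h end).
  have h1 := Ha (eps, bb) (or_introl erefl).
  have h2 := Ha (~~ eps, bb) (or_intror (or_introl erefl)).
  by move: h1 h2; rewrite /satisfies /=; destruct eps => /=.
exists p; split; first by split => // bb.
move=> q [qS Hq].
apply: functional_extensionality => -[eps bb].
apply: propositional_extensionality.
case: eps; first by rewrite /p /=; split => /Hq.
rewrite (type_neg bb qS) /p /=; split => h1 h2; apply: h1; exact/Hq.
Qed.
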